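(* Let $d,a,b$ be positive integers, $r=(d+2b)/d$, $R=(a+d)/d$, with $R\ge3r$; let $\Phi$ and $x_0<r<x_1$ be as in the context. Let $x\in(1,\infty)$. (i) If $x\in[x_0,x_1]$, there is a unique $y_x\ge0$ with $x+iy_x\ne r$ and $\Phi(x+iy_x)=0$; moreover $\Phi(x+iy)>0$ for $0<y<y_x$ and $\Phi(x+iy)<0$ for $y>y_x$. (ii) If $x\notin[x_0,x_1]$, then $\Phi(x+iy)<0$ for every $y\ge0$.
   Context: For $t\in\mathbb C\setminus\{\pm1,\pm r\}$ let $\Phi(t)=d\log|t+r|-d\log|t-r|+(a+d)(\log|t-1|-\log|t+1|)$. Under $R\ge3r$, there is a unique $x_0\in(1,r)$ and a unique $x_1\in(r,\infty)$ with $\Phi(x_0)=\Phi(x_1)=0$. *)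

(* Defs.v *)
From Stdlib Require Import Reals.
Open Scope R_scope.

Definition cmod (x y : R) : R := sqrt (x ^ 2 + y ^ 2).

Definition rr (d b : nat) : R := (INR d + 2 * INR b) / INR d.
Definition RR (d a : nat) : R := (INR a + INR d) / INR d.

(* Phi(t) at t = x + i y, with parameter r:
   Phi(t) = d log|t+r| - d log|t-r| + (a+d)(log|t-1| - log|t+1|) *)
Definition Phi (d a b : nat) (x y : R) : R :=
  let r := rr d b in
  INR d * ln (cmod (x + r) y) - INR d * ln (cmod (x - r) y)
  + (INR a + INR d) * (ln (cmod (x - 1) y) - ln (cmod (x + 1) y)).

(* Main.v *)
Require Import Defs.
From Stdlib Require Import Reals Lra Lia Ranalysis5.
Open Scope R_scope.

Lemma dpl_eq f x l l' : derivable_pt_lim f x l -> l = l' -> derivable_pt_lim f x l'.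
Proof. intros H ->; exact H. Qed.
Lemma dpl_plus f g x l1 l2 : derivable_pt_lim f x l1 -> derivable_pt_lim g x l2 ->
  derivable_pt_lim (fun y => f y + g y) x (l1 + l2).
Proof. intros; apply (derivable_pt_lim_plus f g); auto. Qed.
Lemma dpl_minus f g x l1 l2 : derivable_pt_lim f x l1 -> derivable_pt_lim g x l2 ->
  derivable_pt_lim (fun y => f y - g y) x (l1 - l2).
Proof. intros; apply (derivable_pt_lim_minus f g); auto. Qed.
Lemma dpl_scal f k x l : derivable_pt_lim f x l ->
  derivable_pt_lim (fun y => k * f y) x (k * l).
Proof. intros; apply (derivable_pt_lim_scal f k); auto. Qed.
Lemma dpl_lnK K s : 0 < K + s -> derivable_pt_lim (fun t => ln (K + t)) s (/ (K + s)).
Proof.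
  intros H.
  apply dpl_eq with (/ (K+s) * (0 + 1)).
  - apply (derivable_pt_lim_comp (fun t => K + t) ln).
    + apply (dpl_plus (fun _ => K) (fun t => t)).
      * apply derivable_pt_lim_const.
      * apply derivable_pt_lim_id.
    + apply derivable_pt_lim_ln; exact H.
  - ring.
Qed.
Lemma dpl_sq c x : derivable_pt_lim (fun t => (t + c) ^ 2 + 0) x (2 * (x + c)).
Proof.
  apply dpl_eq with ((INR 2 * (x+c)^1) * (1 + 0) + 0).
  - apply (dpl_plus (fun t => (t + c)^2) (fun _ => 0)).
    + apply (derivable_pt_lim_comp (fun t => t + c) (fun y => y ^ 2)).
      * apply (dpl_plus (fun t => t) (fun _ => c)).
        -- apply derivable_pt_lim_id.
        -- apply derivable_pt_lim_const.
      * apply derivable_pt_lim_pow.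
    + apply derivable_pt_lim_const.
  - simpl; ring.
Qed.
Lemma dpl_lnsq c x : x + c <> 0 ->
  derivable_pt_lim (fun t => ln ((t + c) ^ 2 + 0)) x (2 / (x + c)).
Proof.
  intros H.
  apply dpl_eq with (/ ((x+c)^2+0) * (2 * (x + c))).
  - apply (derivable_pt_lim_comp (fun t => (t + c) ^ 2 + 0) ln).
    + apply dpl_sq.
    + apply derivable_pt_lim_ln.
      destruct (Rdichotomy _ _ H); nra.
  - field. auto.
Qed.
Lemma dpl_lnsqm c x : x - c <> 0 ->
  derivable_pt_lim (fun t => ln ((t - c) ^ 2 + 0)) x (2 / (x - c)).
Proof.
  intros H. replace (x - c) with (x + - c) by ring.
  exact (dpl_lnsq (-c) x H).
Qed.

Lemma ln_le_sub1 u : 0 < u -> ln u <= u - 1.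
Proof. intros H. pose proof (exp_ineq1_le (ln u)). rewrite exp_ln in H0 by auto. lra. Qed.

Lemma ln_diff_bound A B : 0 < B -> B <= A -> ln A - ln B <= (A - B) / B.
Proof.
  intros HB HA.
  assert (ln (A / B) = ln A - ln B).
  { unfold Rdiv. rewrite ln_mult, ln_Rinv; try lra. apply Rinv_0_lt_compat; lra. }
  rewrite <- H.
  replace ((A - B)/B) with (A/B - 1) by (field; lra).
  apply ln_le_sub1. apply Rdiv_lt_0_compat; lra.
Qed.

Lemma tail_neg (h : R -> R) (P : R -> Prop) :
  (forall u v, P u -> u < v -> P v) ->
  (forall u v, P u -> u < v -> h u < h v) ->
  (forall eps, 0 < eps -> exists T, forall t, T <= t -> h t < eps) ->
  forall s, P s -> h s < 0.
Proof.
  intros HP Hh Heps s Hs.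
  destruct (Rlt_or_le (h s) 0) as [H|H]; auto. exfalso.
  assert (H1 : h s < h (s+1)) by (apply Hh; auto; lra).
  destruct (Heps (h (s+1) - h s)) as [T HT]; [lra|].
  pose proof (HT (Rmax T (s+2)) (Rmax_l _ _)).
  assert (h (s+1) < h (Rmax T (s+2))).
  { apply Hh. apply HP with s; auto; lra. pose proof (Rmax_r T (s+2)); lra. }
  lra.
Qed.

Lemma mvt_neg (f f' : R -> R) u v : u < v ->
  (forall c, u <= c <= v -> derivable_pt_lim f c (f' c)) ->
  (forall c, u < c < v -> f' c < 0) -> f v < f u.
Proof.
  intros Huv Hd Hn. destruct (MVT_cor2 f f' u v Huv Hd) as (c & Hc & Hc2).
  pose proof (Hn c Hc2). nra.
Qed.
Lemma mvt_pos (f f' : R -> R) u v : u < v ->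
  (forall c, u <= c <= v -> derivable_pt_lim f c (f' c)) ->
  (forall c, u < c < v -> 0 < f' c) -> f u < f v.
Proof.
  intros Huv Hd Hn. destruct (MVT_cor2 f f' u v Huv Hd) as (c & Hc & Hc2).
  pose proof (Hn c Hc2). nra.
Qed.
Definition Fs (dd DD r x s : R) : R :=
  dd/2*(ln((x+r)^2+s) - ln((x-r)^2+s)) + DD/2*(ln((x-1)^2+s) - ln((x+1)^2+s)).
Definition Fs' (dd DD r x s : R) : R :=
  dd/2*(/((x+r)^2+s) - /((x-r)^2+s)) + DD/2*(/((x-1)^2+s) - /((x+1)^2+s)).
Definition Qs (dd DD r x s : R) : R :=
  DD*(((x+r)^2+s)*((x-r)^2+s)) - dd*r*(((x-1)^2+s)*((x+1)^2+s)).

Section F.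
Variables dd DD r x : R.
Hypothesis hdd : 0 < dd.
Hypothesis hal : 0 < DD - dd * r.
Hypothesis hbe : 0 < DD * r - dd.
Hypothesis hr : 1 < r.
Hypothesis hx : 1 < x.

Definition dom (s : R) := 0 <= s /\ 0 < (x-r)^2 + s.

Lemma dom_pos s : dom s -> 0 < (x+r)^2+s /\ 0 < (x-r)^2+s /\ 0 < (x-1)^2+s /\ 0 < (x+1)^2+s.
Proof. intros [H1 H2]. repeat split; nra. Qed.

Lemma Fs_deriv s : dom s -> derivable_pt_lim (Fs dd DD r x) s (Fs' dd DD r x s).
Proof.
  intros Hd. destruct (dom_pos s Hd) as (h1 & h2 & h3 & h4).
  unfold Fs, Fs'.
  apply dpl_plus; apply dpl_scal; apply dpl_minus; apply dpl_lnK; auto.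
Qed.

Lemma Fs'_eq s : dom s -> Fs' dd DD r x s =
  2 * x * Qs dd DD r x s / (((x+r)^2+s)*((x-r)^2+s)*(((x-1)^2+s)*((x+1)^2+s))).
Proof.
  intros Hd. destruct (dom_pos s Hd) as (h1 & h2 & h3 & h4).
  unfold Fs', Qs. field. repeat split; lra.
Qed.

Lemma Fs'_sign s : dom s -> (Qs dd DD r x s < 0 -> Fs' dd DD r x s < 0) /\
   (0 < Qs dd DD r x s -> 0 < Fs' dd DD r x s).
Proof.
  intros Hd. rewrite Fs'_eq by auto. destruct (dom_pos s Hd) as (h1 & h2 & h3 & h4).
  set (P := ((x+r)^2+s)*((x-r)^2+s)*(((x-1)^2+s)*((x+1)^2+s))).
  assert (0 < P) by (unfold P; repeat apply Rmult_lt_0_compat; auto).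
  split; intros; unfold Rdiv.
  - assert (0 < / P) by (apply Rinv_0_lt_compat; auto).
    assert (Qs dd DD r x s * / P < 0) by nra.
    replace (2 * x * Qs dd DD r x s * / P) with ((2*x)*(Qs dd DD r x s * / P)) by ring. nra.
  - assert (0 < / P) by (apply Rinv_0_lt_compat; auto).
    repeat apply Rmult_lt_0_compat; lra.
Qed.

Lemma Q_shape : exists ss, 0 <= ss /\
  (forall s, 0 < s < ss -> Qs dd DD r x s < 0) /\
  (forall s, ss < s -> 0 < Qs dd DD r x s).
Proof.
  set (al := DD - dd*r).
  set (be := DD*(((x+r)^2) + (x-r)^2) - dd*r*((x-1)^2 + (x+1)^2)).
  set (ga := DD*((x+r)^2*(x-r)^2) - dd*r*((x-1)^2*(x+1)^2)).
  assert (Hal : 0 < al) by (unfold al; lra).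
  assert (HQ : forall s, Qs dd DD r x s = al*s^2 + be*s + ga).
  { intros; unfold Qs, al, be, ga; ring. }
  assert (Hbe : 0 < be).
  { unfold be. replace (DD * ((x + r) ^ 2 + (x - r) ^ 2) - dd * r * ((x - 1) ^ 2 + (x + 1) ^ 2))
      with (2*((DD - dd*r)*x^2 + r*(DD*r - dd))) by ring.
    assert (0 < x^2) by nra. assert (0 < r * (DD*r-dd)) by nra. nra. }
  destruct (Rle_or_lt 0 ga) as [Hg|Hg].
  - exists 0. split; [lra|split].
    + intros; lra.
    + intros s Hs. rewrite HQ. assert (0 < s^2) by nra. nra.
  - set (De := be^2 - 4*al*ga).
    assert (HDe : be^2 < De) by (unfold De; assert (al*ga < 0) by (apply Rmult_pos_neg; lra); lra).
    set (sq := sqrt De).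
    assert (Hsq : sq * sq = De) by (unfold sq; apply sqrt_sqrt; nra).
    assert (Hsq0 : 0 <= sq) by (unfold sq; apply sqrt_pos).
    assert (Hsqb : be < sq) by nra.
    exists ((- be + sq)/(2*al)).
    assert (Hfac : forall s, Qs dd DD r x s = al*(s - (-be+sq)/(2*al))*(s - (-be-sq)/(2*al))).
    { intros s; rewrite HQ. field_simplify; [|lra].
      replace ga with ((be^2 - De)/(4*al)) by (unfold De; field; lra).
      rewrite <- Hsq. field. lra. }
    assert (Hs1 : 0 < (-be+sq)/(2*al)) by (apply Rdiv_lt_0_compat; lra).
    assert (Hs2 : (-be-sq)/(2*al) < 0).
    { apply Ropp_lt_cancel. rewrite Ropp_0. replace (- ((- be - sq) / (2 * al))) with ((be+sq)/(2*al)) by (field; lra).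
      apply Rdiv_lt_0_compat; lra. }
    split; [lra|split].
    + intros s Hs. rewrite Hfac. assert (0 < s - (- be - sq) / (2 * al)) by lra.
      assert (s - (- be + sq) / (2 * al) < 0) by lra.
      assert (0 < al * (s - (- be - sq) / (2 * al))) by nra. nra.
    + intros s Hs. rewrite Hfac. assert (0 < s - (- be - sq) / (2 * al)) by lra.
      assert (0 < s - (- be + sq) / (2 * al)) by lra.
      repeat apply Rmult_lt_0_compat; lra.
Qed.

End F.
Section F2.
Variables dd DD r x : R.
Hypothesis hdd : 0 < dd.
Hypothesis hal : 0 < DD - dd * r.
Hypothesis hbe : 0 < DD * r - dd.
Hypothesis hr : 1 < r.
Hypothesis hx : 1 < x.
Variable ss : R.
Hypothesis hss0 : 0 <= ss.
Hypothesis hssl : forall s, 0 < s < ss -> Qs dd DD r x s < 0.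
Hypothesis hssr : forall s, ss < s -> 0 < Qs dd DD r x s.

Notation F := (Fs dd DD r x).
Notation domx := (dom r x).

Lemma dom_up u v : domx u -> u <= v -> domx v.
Proof. unfold dom; intros [H1 H2] H; split; lra. Qed.

Lemma F_decr s1 s2 : domx s1 -> s1 < s2 <= ss -> F s2 < F s1.
Proof.
  intros Hd Hs. apply (mvt_neg F (Fs' dd DD r x)); [lra| |].
  - intros c Hc. apply Fs_deriv; auto. apply dom_up with s1; auto; lra.
  - intros c Hc. apply (Fs'_sign dd DD r x); auto. apply dom_up with s1; auto; lra.
    apply hssl. destruct Hd. lra.
Qed.

Lemma F_incr s1 s2 : domx s1 -> ss <= s1 < s2 -> F s1 < F s2.
Proof.
  intros Hd Hs. apply (mvt_pos F (Fs' dd DD r x)); [lra| |].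
  - intros c Hc. apply Fs_deriv; auto. apply dom_up with s1; auto; lra.
  - intros c Hc. apply (Fs'_sign dd DD r x); auto. apply dom_up with s1; auto; lra.
    apply hssr. lra.
Qed.

Lemma F_bound t : domx t -> F t <= dd/2 * (4*x*r) / ((x-r)^2 + t).
Proof.
  intros Hd. destruct (dom_pos r x hr hx t Hd) as (h1 & h2 & h3 & h4).
  unfold Fs.
  assert (ln ((x + r) ^ 2 + t) - ln ((x - r) ^ 2 + t) <= 4*x*r / ((x-r)^2+t)).
  { replace (4*x*r) with (((x + r) ^ 2 + t) - ((x - r) ^ 2 + t)) by ring.
    apply ln_diff_bound; auto. nra. }
  assert (ln ((x - 1) ^ 2 + t) < ln ((x + 1) ^ 2 + t)) by (apply ln_increasing; nra).
  assert (0 < DD) by nra.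
  unfold Rdiv at 2. rewrite Rmult_assoc. fold (Rdiv (4*x*r) ((x - r) ^ 2 + t)).
  assert (0 < dd / 2) by lra. nra.
Qed.

Lemma F_tail s : domx s -> ss <= s -> F s < 0.
Proof.
  intros Hd Hs.
  apply (tail_neg F (fun s => domx s /\ ss <= s)); [ | | | split; auto].
  - intros u v [H1 H2] H; split; [apply dom_up with u|]; auto; lra.
  - intros u v [H1 H2] H; apply F_incr; auto.
  - intros eps He. exists (1 + dd * (4*x*r) / eps). intros t Ht.
    assert (Hp : 0 < dd * (4*x*r)) by (apply Rmult_lt_0_compat; [lra| nra]).
    assert (0 < dd * (4*x*r) / eps) by (apply Rdiv_lt_0_compat; lra).
    pose proof (pow2_ge_0 (x-r)).
    assert (Hdt : domx t) by (split; lra).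
    eapply Rle_lt_trans; [apply F_bound; auto|].
    apply Rmult_lt_reg_r with ((x - r) ^ 2 + t); [nra|].
    unfold Rdiv. rewrite Rmult_assoc, Rinv_l by nra.
    assert (dd * (4*x*r) < eps * t).
    { assert (Hq : dd * (4 * x * r) / eps * eps < t * eps) by (apply Rmult_lt_compat_r; lra).
      unfold Rdiv in Hq. rewrite Rmult_assoc, Rinv_l in Hq by lra. lra. }
    nra.
Qed.

End F2.
Lemma ln_le u v : 0 < u -> u <= v -> ln u <= ln v.
Proof. intros H1 H2. destruct H2 as [H2|H2]; [left; apply ln_increasing; auto| subst; lra]. Qed.

Section F3.
Variables dd DD r x : R.
Hypothesis hdd : 0 < dd.
Hypothesis hal : 0 < DD - dd * r.
Hypothesis hbe : 0 < DD * r - dd.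
Hypothesis hr : 1 < r.
Hypothesis hx : 1 < x.
Variable ss : R.
Hypothesis hss0 : 0 <= ss.
Hypothesis hssl : forall s, 0 < s < ss -> Qs dd DD r x s < 0.
Hypothesis hssr : forall s, ss < s -> 0 < Qs dd DD r x s.

Notation F := (Fs dd DD r x).
Notation domx := (dom r x).

Lemma F_neg_all : x <> r -> F 0 <= 0 -> forall s, 0 < s -> F s < 0.
Proof.
  intros Hxr H0 s Hs.
  assert (0 < (x-r)^2) by (assert (x - r <> 0) by lra; destruct (Rdichotomy _ _ H); nra).
  destruct (Rle_or_lt s ss).
  - assert (F s < F 0). { apply (F_decr dd DD r x hr hx ss hssl); unfold dom; repeat split; lra. }
    lra.
  - apply (F_tail dd DD r x hdd hal hr hx ss hssr); unfold dom; repeat split; lra.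
Qed.

Lemma F_cont c : domx c -> continuity_pt F c.
Proof.
  intros Hd. apply derivable_continuous_pt.
  exists (Fs' dd DD r x c). apply (Fs_deriv dd DD r x hr hx); auto.
Qed.

Lemma F_pos_case s1 : domx s1 -> 0 < F s1 -> exists z, s1 < z /\ domx z /\ F z = 0 /\
  (forall s, domx s -> s < z -> 0 < F s) /\ (forall s, domx s -> z < s -> F s < 0).
Proof.
  intros Hd Hp.
  assert (Hlt : s1 < ss).
  { destruct (Rlt_or_le s1 ss); auto.
    pose proof (F_tail dd DD r x hdd hal hr hx ss hssr s1 Hd H). lra. }
  assert (Hdss : domx ss) by (apply (dom_up r x) with s1; auto; lra).
  assert (Hss : F ss < 0) by (apply (F_tail dd DD r x hdd hal hr hx ss hssr); auto; lra).
  destruct (IVT_interv (opp_fct F) s1 ss) as [z [Hz1 Hz2]]; auto.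
  - intros c Hc. apply continuity_pt_opp. apply F_cont. apply (dom_up r x) with s1; auto; lra.
  - unfold opp_fct; lra.
  - unfold opp_fct; lra.
  - unfold opp_fct in Hz2. assert (Fz : F z = 0) by lra.
    assert (Hz : s1 < z). { destruct Hz1 as [[H|H] _]; auto. subst; lra. }
    assert (Hdz : domx z) by (apply (dom_up r x) with s1; auto; lra).
    exists z. split; [auto|split; [auto|split; [auto|split]]].
    + intros s Hs Hsz. rewrite <- Fz. apply (F_decr dd DD r x hr hx ss hssl); auto. lra.
    + intros s Hs Hsz. destruct (Rle_or_lt s ss).
      * rewrite <- Fz. apply (F_decr dd DD r x hr hx ss hssl); auto.
      * apply (F_tail dd DD r x hdd hal hr hx ss hssr); auto; lra.
Qed.

Lemma F_r_pos : x = r -> exists s1, domx s1 /\ 0 < F s1.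
Proof.
  intros Hxr.
  set (L1 := ln ((x+r)^2)). set (L2 := ln ((x-1)^2)). set (L3 := ln ((x+1)^2+1)).
  set (K := L1 + DD/dd*(L2-L3) - 1).
  set (s := Rmin 1 (exp K)).
  assert (Hs0 : 0 < s) by (unfold s; apply Rmin_glb_lt; [lra| apply exp_pos]).
  assert (Hs1 : s <= 1) by (unfold s; apply Rmin_l).
  assert (HlnK : ln s <= K).
  { unfold s, Rmin. destruct (Rle_dec 1 (exp K)).
    - rewrite <- (ln_exp K). apply ln_le; lra.
    - rewrite ln_exp; lra. }
  exists s. split.
  - split; [lra|]. rewrite Hxr. replace ((r-r)^2+s) with s by ring. auto.
  - unfold Fs. replace ((x - r)^2 + s) with s by (rewrite Hxr; ring).
    assert (HA : L1 <= ln ((x + r) ^ 2 + s)) by (apply ln_le; nra).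
    assert (HB : L2 <= ln ((x - 1) ^ 2 + s)) by (apply ln_le; nra).
    assert (HC : ln ((x + 1) ^ 2 + s) <= L3) by (apply ln_le; nra).
    assert (0 < DD) by nra.
    assert (E : dd/2 * (L1 - K) = dd/2 - DD/2*(L2-L3)) by (unfold K; field; lra).
    assert (dd/2*(L1 - K) <= dd/2*(ln ((x + r) ^ 2 + s) - ln s)) by (apply Rmult_le_compat_l; lra).
    assert (DD/2*(L2-L3) <= DD / 2 * (ln ((x - 1) ^ 2 + s) - ln ((x + 1) ^ 2 + s)))
      by (apply Rmult_le_compat_l; lra).
    lra.
Qed.
End F3.
Definition Gd (dd DD r x : R) := dd/2*(2/(x+r) - 2/(x-r)) + DD/2*(2/(x-1) - 2/(x+1)).

Section G.
Variables dd DD r : R.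
Hypothesis hdd : 0 < dd.
Hypothesis hal : 0 < DD - dd * r.
Hypothesis hbe : 0 < DD * r - dd.
Hypothesis hr : 1 < r.

Notation G := (fun y => Fs dd DD r y 0).

Lemma G_deriv c : 1 < c -> c <> r -> derivable_pt_lim G c (Gd dd DD r c).
Proof.
  intros h1 h2. unfold Fs, Gd.
  apply dpl_plus; apply dpl_scal; apply dpl_minus;
    first [apply dpl_lnsq | apply dpl_lnsqm]; lra.
Qed.

Lemma Gd_low c : 1 < c < r -> 0 < Gd dd DD r c.
Proof.
  intros h. unfold Gd.
  assert (0 < 2/(c+r)) by (apply Rdiv_lt_0_compat; lra).
  assert (2/(c-r) < 0).
  { unfold Rdiv. apply Rmult_pos_neg; [lra|]. apply Rinv_lt_0_compat; lra. }
  assert (2/(c+1) < 2/(c-1)).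
  { unfold Rdiv. apply Rmult_lt_compat_l; [lra|]. apply Rinv_lt_contravar; nra. }
  assert (0 < DD) by nra.
  assert (0 < dd/2 * (2 / (c + r) - 2 / (c - r))) by (apply Rmult_lt_0_compat; lra).
  assert (0 < DD/2 * (2 / (c - 1) - 2 / (c + 1))) by (apply Rmult_lt_0_compat; lra).
  lra.
Qed.

Definition xs := sqrt (r * (DD * r - dd) / (DD - dd * r)).

Lemma xs_sq : xs * xs = r * (DD * r - dd) / (DD - dd * r).
Proof. unfold xs. apply sqrt_sqrt. apply Rlt_le, Rdiv_lt_0_compat; nra. Qed.

Lemma xs_gt : r < xs.
Proof.
  pose proof xs_sq. assert (0 <= xs) by (unfold xs; apply sqrt_pos).
  assert (r*r < xs*xs).
  { rewrite H. apply Rmult_lt_reg_r with (DD - dd*r); auto.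
    replace (r * (DD*r - dd) / (DD - dd*r) * (DD - dd*r)) with (r*(DD*r-dd)) by (field; lra).
    assert (r < r*r*r) by nra. nra. }
  nra.
Qed.

Lemma Gd_eq c : 1 < c -> c <> r -> Gd dd DD r c =
  2 * (DD*(c^2 - r^2) - dd*r*(c^2-1)) / ((c^2-1)*(c^2-r^2)).
Proof.
  intros h1 h2. unfold Gd.
  assert (c^2 - r^2 <> 0).
  { replace (c^2-r^2) with ((c-r)*(c+r)) by ring. apply Rmult_integral_contrapositive; split; lra. }
  assert (c^2 - 1 <> 0) by nra.
  field. repeat split; lra.
Qed.

Lemma Gd_mid c : r < c < xs -> Gd dd DD r c < 0.
Proof.
  intros h. rewrite Gd_eq by lra. pose proof xs_sq.
  assert (c*c < xs*xs) by nra.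
  assert (HP : DD*(c^2 - r^2) - dd*r*(c^2-1) < 0).
  { replace (DD*(c^2 - r^2) - dd*r*(c^2-1)) with ((DD - dd*r)*(c*c) - r*(DD*r - dd)) by ring.
    assert (r*(DD*r-dd) = (DD - dd*r)*(xs*xs)) by (rewrite H; field; lra).
    rewrite H1. nra. }
  assert (0 < (c^2-1)*(c^2-r^2)) by (apply Rmult_lt_0_compat; nra).
  unfold Rdiv. assert (0 < / ((c^2-1)*(c^2-r^2))) by (apply Rinv_0_lt_compat; auto).
  nra.
Qed.

Lemma Gd_high c : xs < c -> 0 < Gd dd DD r c.
Proof.
  intros h. pose proof xs_gt. rewrite Gd_eq by lra. pose proof xs_sq.
  assert (0 <= xs) by lra.
  assert (xs*xs < c*c) by nra.
  assert (HP : 0 < DD*(c^2 - r^2) - dd*r*(c^2-1)).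
  { replace (DD*(c^2 - r^2) - dd*r*(c^2-1)) with ((DD - dd*r)*(c*c) - r*(DD*r - dd)) by ring.
    assert (r*(DD*r-dd) = (DD - dd*r)*(xs*xs)) by (rewrite H0; field; lra).
    rewrite H3. nra. }
  assert (0 < (c^2-1)*(c^2-r^2)) by (apply Rmult_lt_0_compat; nra).
  apply Rdiv_lt_0_compat; lra.
Qed.

Lemma G_incr_low u v : 1 < u -> u < v -> v < r -> G u < G v.
Proof.
  intros. apply (mvt_pos G (Gd dd DD r)); auto.
  - intros c Hc. apply G_deriv; lra.
  - intros c Hc. apply Gd_low; lra.
Qed.

Lemma G_decr_mid u v : r < u -> u < v -> v <= xs -> G v < G u.
Proof.
  intros. apply (mvt_neg G (Gd dd DD r)); auto.
  - intros c Hc. apply G_deriv; lra.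
  - intros c Hc. apply Gd_mid; lra.
Qed.

Lemma G_incr_high u v : xs <= u -> u < v -> G u < G v.
Proof.
  intros. pose proof xs_gt. apply (mvt_pos G (Gd dd DD r)); auto.
  - intros c Hc. apply G_deriv; lra.
  - intros c Hc. apply Gd_high; lra.
Qed.

Lemma G_tail u : xs <= u -> G u < 0.
Proof.
  intros Hu. pose proof xs_gt.
  apply (tail_neg G (fun u => xs <= u)); auto.
  - intros; lra.
  - intros; apply G_incr_high; auto.
  - intros eps He. exists (2*r + 16*dd*r/eps). intros t Ht.
    assert (0 < 16*dd*r/eps) by (apply Rdiv_lt_0_compat; nra).
    assert (Hdt : dom r t 0).
    { split; [lra|]. assert (0 < t - r) by lra. nra. }
    eapply Rle_lt_trans; [apply (F_bound dd DD r t hdd hal hr); auto; lra|].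
    assert (Ht2 : 16*dd*r <= eps*t).
    { assert (Hq : 16 * dd * r / eps * eps <= t * eps) by (apply Rmult_le_compat_r; lra).
      unfold Rdiv in Hq. rewrite Rmult_assoc, Rinv_l in Hq by lra. lra. }
    assert (HD : 0 < (t-r)^2 + 0) by (assert (0 < t - r) by lra; nra).
    apply Rmult_lt_reg_r with ((t-r)^2 + 0); auto.
    unfold Rdiv. rewrite Rmult_assoc, Rinv_l by lra.
    assert (t*t <= 4*((t-r)^2+0)) by nra.
    assert (0 < dd*r) by nra.
    assert (0 < t) by lra.
    nra.
Qed.

Lemma G_sign x0 x1 : 1 < x0 < r -> G x0 = 0 -> r < x1 -> G x1 = 0 ->
  forall x, 1 < x -> x <> r ->
  (x0 < x < x1 -> 0 < G x) /\ (x < x0 \/ x1 < x -> G x < 0).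
Proof.
  intros h0 g0 h1 g1 x hx hxr. simpl in g0, g1 |- *. pose proof xs_gt.
  assert (Hx1 : x1 < xs).
  { destruct (Rlt_or_le x1 xs); auto. pose proof (G_tail x1 H0). simpl in H1. lra. }
  destruct (Rlt_or_le x r) as [Hl|Hl].
  - split.
    + intros. pose proof (G_incr_low x0 x) as Hm. simpl in Hm. assert (Fs dd DD r x0 0 < Fs dd DD r x 0) by (apply Hm; lra). lra.
    + intros [H1|H1]; [|lra]. pose proof (G_incr_low x x0) as Hm. simpl in Hm. assert (Fs dd DD r x 0 < Fs dd DD r x0 0) by (apply Hm; lra). lra.
  - assert (Hl' : r < x) by lra. split.
    + intros. pose proof (G_decr_mid x x1) as Hm. simpl in Hm. assert (Fs dd DD r x1 0 < Fs dd DD r x 0) by (apply Hm; lra). lra.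
    + intros [H1|H1]; [lra|]. destruct (Rle_or_lt x xs).
      * pose proof (G_decr_mid x1 x) as Hm. simpl in Hm. assert (Fs dd DD r x 0 < Fs dd DD r x1 0) by (apply Hm; lra). lra.
      * apply (G_tail x); lra.
Qed.
End G.
Lemma ln_sqrt' u : 0 < u -> ln (sqrt u) = ln u / 2.
Proof.
  intros H. assert (0 < sqrt u) by (apply sqrt_lt_R0; auto).
  rewrite <- (sqrt_sqrt u) at 2 by lra. rewrite ln_mult by auto. field.
Qed.

Theorem lemma4p8 (d a b : nat) (x0 x1 : R) :
  (0 < d)%nat -> (0 < a)%nat -> (0 < b)%nat ->
  RR d a >= 3 * rr d b ->
  1 < x0 < rr d b -> Phi d a b x0 0 = 0 ->
  rr d b < x1 -> Phi d a b x1 0 = 0 ->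
  (forall x : R, 1 < x -> x0 <= x <= x1 ->
     exists yx : R,
       0 <= yx /\ ~ (x = rr d b /\ yx = 0) /\ Phi d a b x yx = 0 /\
       (forall y : R, 0 <= y -> ~ (x = rr d b /\ y = 0) ->
          Phi d a b x y = 0 -> y = yx) /\
       (forall y : R, 0 < y < yx -> Phi d a b x y > 0) /\
       (forall y : R, y > yx -> Phi d a b x y < 0)) /\
  (forall x : R, 1 < x -> ~ (x0 <= x <= x1) ->
     forall y : R, 0 <= y -> Phi d a b x y < 0).
Proof.
  intros hd ha hb hRR h0 p0 h1 p1.
  assert (hdd : 0 < INR d) by (apply lt_0_INR; lia).
  assert (haa : 0 < INR a) by (apply lt_0_INR; lia).
  assert (hbb : 0 < INR b) by (apply lt_0_INR; lia).
  assert (Hdr : INR d * rr d b = INR d + 2 * INR b) by (unfold rr; field; lra).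
  assert (hr : 1 < rr d b).
  { unfold rr. apply Rmult_lt_reg_r with (INR d); auto.
    unfold Rdiv. rewrite Rmult_assoc, Rinv_l by lra. lra. }
  assert (hal : 0 < (INR a + INR d) - INR d * rr d b).
  { rewrite Hdr. unfold RR in hRR.
    assert (E1 : (INR a + INR d) / INR d * INR d = INR a + INR d) by (field; lra).
    assert (E2 : rr d b * INR d = INR d + 2 * INR b) by lra.
    assert (3 * rr d b * INR d <= (INR a + INR d) / INR d * INR d)
      by (apply Rmult_le_compat_r; lra).
    lra. }
  assert (hbe : 0 < (INR a + INR d) * rr d b - INR d) by nra.
  set (DD := INR a + INR d) in *. set (dd := INR d) in *. set (r := rr d b) in *.
  assert (Link : forall x y, 1 < x -> 0 < (x - r)^2 + y^2 -> Phi d a b x y = Fs dd DD r x (y^2)).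
  { intros x y hx hp. unfold Phi, cmod, Fs. fold r dd DD.
    pose proof (pow2_ge_0 y). pose proof (pow2_ge_0 (x-1)).
    assert (0 < (x+r)^2) by nra. assert (0 < (x+1)^2) by nra. assert (0 < (x-1)^2) by nra.
    rewrite !ln_sqrt' by lra. field. }
  assert (G0 : Fs dd DD r x0 0 = 0).
  { rewrite Link in p0; [| lra |assert (0 < r - x0) by lra; nra]. replace (0^2) with 0 in p0 by ring. exact p0. }
  assert (G1 : Fs dd DD r x1 0 = 0).
  { rewrite Link in p1; [| lra |assert (0 < x1 - r) by lra; nra]. replace (0^2) with 0 in p1 by ring. exact p1. }
  pose proof (G_sign dd DD r hdd hal hbe hr x0 x1 h0 G0 h1 G1) as GS.
  assert (Hsq : forall x, x <> r -> 0 < (x - r)^2).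
  { intros x H. assert (x - r <> 0) by lra. destruct (Rdichotomy _ _ H0); nra. }
  split.
  - intros x hx hin.
    destruct (Q_shape dd DD r x hal hbe hr hx) as (ss & hss0 & hssl & hssr).
    assert (Fin : forall z, 0 < z -> dom r x z -> Fs dd DD r x z = 0 ->
       (forall s, dom r x s -> s < z -> 0 < Fs dd DD r x s) ->
       (forall s, dom r x s -> z < s -> Fs dd DD r x s < 0) ->
       exists yx : R,
       0 <= yx /\ ~ (x = r /\ yx = 0) /\ Phi d a b x yx = 0 /\
       (forall y : R, 0 <= y -> ~ (x = r /\ y = 0) ->
          Phi d a b x y = 0 -> y = yx) /\
       (forall y : R, 0 < y < yx -> Phi d a b x y > 0) /\
       (forall y : R, y > yx -> Phi d a b x y < 0)).
    { intros z hz hdz Fz hlo hhi.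
      assert (hsz : 0 < sqrt z) by (apply sqrt_lt_R0; auto).
      assert (hsz2 : sqrt z ^ 2 = z) by (apply pow2_sqrt; lra).
      assert (Dy : forall y, 0 < y -> dom r x (y^2) /\ 0 < (x - r)^2 + y^2).
      { intros y hy. pose proof (pow2_ge_0 (x - r)). split; [split|]; nra. }
      exists (sqrt z). split; [lra|split; [lra|split; [|split; [|split]]]].
      - rewrite Link, hsz2; auto. destruct hdz; lra.
      - intros y hy hnot hP.
        assert (hy' : 0 < y).
        { destruct hy as [hy|hy]; auto. subst y.
          destruct (Req_dec x r) as [E|E]; [exfalso; auto|].
          rewrite Link in hP; auto; [|pose proof (Hsq x E); nra].
          replace (0^2) with 0 in hP by ring.
          assert (0 < Fs dd DD r x 0) by (apply hlo; auto; split; [lra|pose proof (Hsq x E); lra]).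
          lra. }
        destruct (Dy y hy') as [hd1 hd2].
        rewrite Link in hP; auto.
        destruct (Rtotal_order (y^2) z) as [Hl|[He|Hg]].
        + pose proof (hlo _ hd1 Hl). lra.
        + rewrite <- He. rewrite sqrt_pow2; lra.
        + pose proof (hhi _ hd1 Hg). lra.
      - intros y hy. destruct (Dy y (proj1 hy)) as [hd1 hd2]. rewrite Link; auto.
        apply Rlt_gt, hlo; auto. rewrite <- hsz2. nra.
      - intros y hy. assert (0 < y) by lra. destruct (Dy y H) as [hd1 hd2]. rewrite Link; auto.
        apply hhi; auto. rewrite <- hsz2. nra. }
    destruct (Req_dec x r) as [E|E].
    + destruct (F_r_pos dd DD r x hdd hal hx E) as (s1 & hs1 & Fs1).
      destruct (F_pos_case dd DD r x hdd hal hr hx ss hssl hssr s1 hs1 Fs1)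
        as (z & hz & hdz & Fz & hlo & hhi).
      apply (Fin z); auto. destruct hs1; lra.
    + destruct (Rlt_or_le 0 (Fs dd DD r x 0)) as [Gp|Gn].
      * assert (hd0 : dom r x 0) by (split; [lra| pose proof (Hsq x E); lra]).
        destruct (F_pos_case dd DD r x hdd hal hr hx ss hssl hssr 0 hd0 Gp)
          as (z & hz & hdz & Fz & hlo & hhi).
        apply (Fin z); auto.
      * assert (Gz : Fs dd DD r x 0 = 0).
        { destruct (Req_dec x x0) as [->|E0]; auto.
          destruct (Req_dec x x1) as [->|E1]; auto.
          assert (0 < Fs dd DD r x 0) by (apply (proj1 (GS x hx E)); lra). lra. }
        pose proof (F_neg_all dd DD r x hdd hal hr hx ss hssl hssr E Gn) as Neg.
        exists 0. split; [lra|split; [intros [? ?]; auto|split; [|split; [|split]]]].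
        -- rewrite Link; [replace (0^2) with 0 by ring; auto|lra|pose proof (Hsq x E); nra].
        -- intros y hy _ hP. destruct hy as [hy|hy]; [|auto].
           rewrite Link in hP; [|lra|pose proof (Hsq x E); nra].
           assert (0 < y^2) by nra. pose proof (Neg _ H). lra.
        -- intros; lra.
        -- intros y hy. rewrite Link; [|lra|pose proof (Hsq x E); nra].
           apply Neg. nra.
  - intros x hx hn y hy.
    assert (E : x <> r) by (intro; apply hn; lra).
    destruct (Q_shape dd DD r x hal hbe hr hx) as (ss & hss0 & hssl & hssr).
    assert (Gneg : Fs dd DD r x 0 < 0) by (apply (proj2 (GS x hx E)); lra).
    rewrite Link; [|lra|pose proof (Hsq x E); nra].
    destruct hy as [hy|hy].
    + apply (F_neg_all dd DD r x hdd hal hr hx ss hssl hssr E); [lra|nra].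
    + subst y. replace (0^2) with 0 by ring. auto.
Qed.
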